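(* Let $T$ be a tree with leaves $1,\dots,n$ in which every non-leaf node has degree $3$, and let $i,j$ be two leaves of $T$. Let $\alpha,\beta\in[-1,1]^{\binom n2}$ satisfy $\alpha_{kl}=\beta_{kl}$ for all pairs $(k,l)\neq(i,j)$. Define $\gamma\in[-1,1]^{\binom n2}$ by $\gamma_{kl}=0$ if the paths $P_{ij}$ and $P_{kl}$ have a common edge, and $\gamma_{kl}=\alpha_{kl}$ otherwise. Then for every $x\in\{-1,1\}^n$, $$f_x^T(\alpha)-f_x^T(\beta) = x_ix_j(\alpha_{ij}-\beta_{ij})\, f_x^{T\setminus\{i,j\}}(\gamma).$$
   Context: $P_{kl}$ denotes the path between nodes $k,l$. For a forest $F$ whose set of labeled leaves is $\{1,\dots,n\}$ and an even-cardinality subset $S\subseteq[n]$, a closest relative matching of $S$ in $F$ is a partition of $S$ into pairs such that each pair lies in a common connected component of $F$ and the paths (in $F$) joining distinct pairs are edge-disjoint; when it exists it is unique. For $\alpha\in[-1,1]^{\binom n2}$ let $\alpha^F_S=\prod_{(a,b)}\alpha_{ab}$ over the pairs of this matching (and $\alpha^F_\emptyset=1$). Define $f_x^F(\alpha)=2^{-n}\sum_{S}\alpha^F_S\prod_{k\in S}x_k$, the sum over even subsets $S\subseteq[n]$ admitting a closest relative matching in $F$ (for a tree $F$ this is every even subset). For a tree this is defined for arbitrary $\alpha$, and when $\alpha$ is the vector of leaf correlations of a tree Ising model on $T$, $f_x^T(\alpha)$ is the probability of leaf configuration $x$. $T\setminus\{i,j\}$ denotes the forest obtained from $T$ by removing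 all edges of the path $P_{ij}$ (keeping all nodes, with the same leaf labels). *)

(* Defs.v *)
From mathcomp Require Import all_boot all_order all_algebra.
From mathcomp Require Import boolp.
Set Implicit Arguments. Unset Strict Implicit. Unset Printing Implicit Defensive.
Import Order.TTheory GRing.Theory Num.Theory.
Local Open Scope ring_scope.

Section Graphs.
Variable V : finType.

(* A (simple) graph on V is a symmetric irreflexive relation e : rel V.  *)

Definition walk_edges (a : V) (p : seq V) : seq {set V} :=
  [seq [set x.1; x.2] | x <- zip (a :: p) p].

(* E is an edge of a simple path (no repeated vertex) from a to b in e.
   In a forest such a path is unique, so this is "E is an edge of P_ab". *)
Definition on_path (e : rel V) (a b : V) (E : {set V}) : Prop :=
  exists p : seq V,
    [/\ path e a p, last a p = b, uniq (a :: p) & E \in walk_edges a p].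

Definition share_edge (e : rel V) (a b c d : V) : Prop :=
  exists E : {set V}, on_path e a b E /\ on_path e c d E.

Definition is_tree (e : rel V) : Prop :=
  [/\ symmetric e, irreflexive e, (forall u v, connect e u v) &
      ~ (exists p : seq V, [/\ uniq p, (2 < size p)%N & cycle e p])].

Definition degree (e : rel V) (v : V) : nat := #|[set u | e v u]|.

(* T \ {a,b}: remove all edges of the path P_ab, keep all nodes. *)
Definition remove_path (e : rel V) (a b : V) : rel V :=
  fun u v => e u v && ~~ `[< on_path e a b [set u; v] >].

Variable n : nat.
Variable leaf : 'I_n -> V.

Definition crm (e : rel V) (S : {set 'I_n}) (M : {set {set 'I_n}}) : Prop :=
  [/\ partition M S,
      (forall B, B \in M -> #|B| = 2%N),
      (forall B, B \in M -> forall k l, k \in B -> l \in B -> connect e (leaf k) (leaf l)) &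
      (forall B C, B \in M -> C \in M -> B != C -> forall k l k' l',
          B = [set k; l] -> C = [set k'; l'] ->
          ~ share_edge e (leaf k) (leaf l) (leaf k') (leaf l'))].

Variable R : realFieldType.

(* alpha^F_S : product of alpha over the pairs of the (unique) matching. *)
Definition alphaF (e : rel V) (alpha : {set 'I_n} -> R) (S : {set 'I_n}) : R :=
  if [pick M | `[< crm e S M >]] is Some M then \prod_(B in M) alpha B else 0.

Definition fx (e : rel V) (x : 'I_n -> R) (alpha : {set 'I_n} -> R) : R :=
  (2%:R ^+ n)^-1 *
  \sum_(S : {set 'I_n} | ~~ odd #|S| && `[< exists M, crm e S M >])
     alphaF e alpha S * \prod_(k in S) x k.

Definition gammaV (e : rel V) (i j : 'I_n) (alpha : {set 'I_n} -> R)
  : {set 'I_n} -> R :=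
  fun B => if `[< exists k l, B = [set k; l] /\
                  share_edge e (leaf i) (leaf j) (leaf k) (leaf l) >]
           then 0 else alpha B.

End Graphs.

(* Main.v *)
Require Import Defs.
From mathcomp Require Import all_boot all_order all_algebra.
From mathcomp Require Import boolp.
From mathcomp Require Import ring.
Import Order.TTheory GRing.Theory Num.Theory.
Set Implicit Arguments. Unset Strict Implicit. Unset Printing Implicit Defensive.

Section Lists.
Variable T : eqType.
Implicit Types (r : rel T) (a c d : T) (p s : seq T).

Lemma zip_split a p c d : (c,d) \in zip (a::p) p ->
  exists s1 s2, a :: p = s1 ++ c :: d :: s2.
Proof.
elim: p a => [|b p IH] a //=.
rewrite in_cons => /orP [/eqP [-> ->]|/IH [s1 [s2 E]]].
  by exists [::], p.
by exists (a :: s1), s2; rewrite E.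
Qed.

Lemma split_zip s1 s2 a p c d : a :: p = s1 ++ c :: d :: s2 ->
  (c,d) \in zip (a::p) p.
Proof.
elim: s1 a p => [|x s1 IH] a p /=.
  by case=> -> ->; rewrite /= mem_head.
case=> _ Ep; case: p Ep => [|b q] Ep; first by destruct s1.
by rewrite /= in_cons (IH _ _ Ep) orbT.
Qed.

Lemma path_zip r a p c d : path r a p -> (c,d) \in zip (a::p) p -> r c d.
Proof.
elim: p a => [|b p IH] a //= /andP [rab pb].
by rewrite in_cons => /orP [/eqP [-> ->] //| /(IH _ pb)].
Qed.

Lemma zip_path r a p : (forall c d, (c,d) \in zip (a::p) p -> r c d) -> path r a p.
Proof.
elim: p a => [|b p IH] a //= H.
rewrite H ?mem_head //= IH // => c d hcd; apply: H; by rewrite in_cons hcd orbT.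
Qed.

Lemma path_split r a p s1 c s2 : a :: p = s1 ++ c :: s2 -> path r a p ->
  path r c s2 /\ exists q, a :: q = rcons s1 c /\ path r a q.
Proof.
elim: s1 a p => [|x s1 IH] a p /=.
  by case=> -> -> H; split => //; exists [::].
case=> <- Ep; case: p Ep => [|b p'] Ep; first by destruct s1.
move=> /= /andP [rab pb]; have [h1 [q [E1 pq]]] := IH b p' Ep pb.
split => //; exists (b :: q); rewrite -E1; split => //=.
by rewrite rab.
Qed.

Lemma uniq_split s t1 t2 c s1 s2 : uniq s -> s = t1 ++ c :: s1 ->
  s = t2 ++ c :: s2 -> t1 = t2 /\ s1 = s2.
Proof.
move=> u E1 E2.
have ix: forall t s', s = t ++ c :: s' -> index c s = size t.
  move=> t s' E; move: u; rewrite E cat_uniq => /and3P [_ H _].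
  rewrite index_cat; have ->: (c \in t) = false.
    apply/negbTE; apply: contra H => ct; apply/hasP; exists c => //.
    by rewrite mem_head.
  by rewrite /= eqxx addn0.
have sz := ix _ _ E1; rewrite (ix _ _ E2) in sz.
move: E2; rewrite E1 => /eqP; rewrite eqseq_cat ?sz // => /andP [/eqP -> /eqP [->]].
by [].
Qed.

Lemma cons_rcons_cat a (cs : seq T) (w : T) (t : seq T) :
  a :: (rcons cs w ++ t) = belast a cs ++ last a cs :: w :: t.
Proof. by rewrite cat_rcons -cat_cons lastI cat_rcons. Qed.

Lemma prefix_cases p1 p2 : p1 = p2 \/ (exists y (r : seq T), p2 = p1 ++ y :: r) \/
  (exists y (r : seq T), p1 = p2 ++ y :: r) \/
  exists (c : seq T) x y (r1 r2 : seq T), [/\ x != y, p1 = c ++ x :: r1 & p2 = c ++ y :: r2].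
Proof.
elim: p1 p2 => [|x p1 IH] [|y p2].
- by left.
- by right; left; exists y, p2.
- by right; right; left; exists x, p1.
case: (eqVneq x y) => [<-|nxy].
  case: (IH p2) => [->|[[z [r ->]]|[[z [r ->]]|[c [x' [y' [r1 [r2 [nx -> ->]]]]]]]]].
  + by left.
  + by right; left; exists z, r.
  + by right; right; left; exists z, r.
  + by right; right; right; exists (x :: c), x', y', r1, r2.
by right; right; right; exists [::], x, y, p1, p2.
Qed.

End Lists.

Lemma set2_eq (T : finType) (a b c d : T) : [set a; b] = [set c; d] ->
  (a = c /\ b = d) \/ (a = d /\ b = c).
Proof.
move=> E.
have ha : (a == c) || (a == d) by rewrite -in_set2 -E set21.
have hb : (b == c) || (b == d) by rewrite -in_set2 -E set22.
have hc : (c == a) || (c == b) by rewrite -in_set2 E set21.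
have hd : (d == a) || (d == b) by rewrite -in_set2 E set22.
case/orP: ha => /eqP ?; case/orP: hb => /eqP ?; subst;
  case/orP: hc => /eqP ?; case/orP: hd => /eqP ?; subst; auto.
Qed.

Lemma spath (T : finType) (r : rel T) a b : connect r a b ->
  exists p, [/\ path r a p, last a p = b & uniq (a::p)].
Proof.
move/connectP => [p pp ->]; case: (shortenP pp) => p' pp' u' _.
by exists p'.
Qed.

Lemma we_split (V : finType) (a : V) p s1 c d s2 :
  a :: p = s1 ++ c :: d :: s2 -> [set c; d] \in walk_edges a p.
Proof. by move=> H; apply/mapP; exists (c, d) => //; apply: split_zip H. Qed.

Lemma we_zip (V : finType) (a : V) p E : E \in walk_edges a p ->
  exists c d, (c,d) \in zip (a::p) p /\ E = [set c; d].
Proof. by case/mapP => [[c d] H ->]; exists c, d. Qed.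

Section Tree.
Variable V : finType.
Variable e : rel V.
Hypothesis esym : symmetric e.
Hypothesis eirr : irreflexive e.
Hypothesis econn : forall u v, connect e u v.
Hypothesis eacyc : ~ (exists p : seq V, [/\ uniq p, (2 < size p)%N & cycle e p]).

Definition cut (E : {set V}) : rel V := fun x y => e x y && ([set x; y] != E).

Lemma cut_sym E : symmetric (cut E).
Proof. by move=> x y; rewrite /cut esym setUC. Qed.

Lemma cut_sub E : subrel (cut E) e.
Proof. by move=> x y /andP []. Qed.

Lemma cut_sep u v : e u v -> ~~ connect (cut [set u; v]) v u.
Proof.
move=> euv; apply/negP => /spath [q [pq lq uq]].
apply: eacyc; exists (v :: q); split => //.
  case: q pq lq uq => [|w q] /=.
    by move=> _ vu; move: euv; rewrite vu eirr.
  case: q => [|w' q] //= /andP [cw _] wu _.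
  by move: cw; rewrite /cut wu setUC eqxx andbF.
rewrite /= rcons_path lq euv andbT.
by apply: (sub_path _ pq) => x y /andP [].
Qed.

Lemma cross u v a p : e u v -> path e a p -> uniq (a :: p) ->
  ([set u; v] \in walk_edges a p) =
  (connect (cut [set u;v]) v a != connect (cut [set u;v]) v (last a p)).
Proof.
move=> euv pa ua.
set E := [set u; v]; set c := cut E.
have cs : connect_sym c := sym_connect_sym (@cut_sym E).
have nvu := cut_sep euv.
apply/idP/idP.
  case/we_zip => x [y [xyin EE]].
  have [s1 [s2 Es]] := zip_split xyin.
  have [ps2 [q [Eq pq]]] := path_split Es pa.
  move: (ua); rewrite Es cat_uniq => /and3P [_ hs /andP [xn _]].
  have yn : y \notin rcons s1 x.
    rewrite mem_rcons in_cons negb_or; apply/andP; split.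
      by apply: contraNneq xn => ->; rewrite mem_head.
    by apply: contra hs => ys; apply/hasP; exists y => //; rewrite !inE eqxx orbT.
  have cax : connect c a x.
    apply/connectP; exists q; last first.
      by transitivity (last a (a :: q)) => //; rewrite Eq last_rcons.
    apply: (@sub_in_path _ (mem (a :: q))); last first; first exact: pq.
      by apply/allP => z.
    move=> z w zin win ezw; rewrite /c /cut ezw /=; apply/eqP => EE'.
    have : y \in [set z; w] by rewrite EE' EE set22.
    by rewrite !inE => /orP [] /eqP yz; move: yn; rewrite -Eq ?yz ?zin ?win.
  have cyb : connect c y (last a p).
    apply/connectP; exists s2; last first.
      by transitivity (last a (a :: p)) => //; rewrite Es last_cat.
    move: ps2 => /= /andP [_ ps2].
    apply: (@sub_in_path _ (mem (y :: s2))); last first; first exact: ps2.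
      by apply/allP => z.
    move=> z w zin win ezw; rewrite /c /cut ezw /=; apply/eqP => EE'.
    have : x \in [set z; w] by rewrite EE' EE set21.
    by rewrite !inE => /orP [] /eqP xz; move: xn; rewrite ?xz ?zin ?win.
  case: (set2_eq EE) => [[ux vy]|[uy vx]]; subst x y.
    rewrite cyb.
    have : ~~ connect c v a.
      by apply: contra nvu => cva; exact: connect_trans cva cax.
    by move/negbTE => ->.
  have cva : connect c v a by rewrite cs.
  have : ~~ connect c v (last a p).
    by apply: contra nvu => cvb; apply: connect_trans cvb _; rewrite cs.
  by rewrite cva => /negbTE ->.
apply: contraR => nE; apply/eqP.
have pc : path c a p.
  apply: zip_path => z w zw; rewrite /c /cut (path_zip pa zw) /=.
  by apply: contraNneq nE => <-; apply/mapP; exists (z, w).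
have cab : connect c a (last a p) by apply/connectP; exists p.
exact: (same_connect_r cs cab v).
Qed.

Lemma on_path_edge (r : rel V) (a b : V) (E : {set V}) : on_path r a b E -> exists u v, E = [set u; v] /\ r u v.
Proof.
case=> p [pp _ _ /we_zip [u [v [uv ->]]]]; exists u, v; split => //.
exact: path_zip pp uv.
Qed.

Lemma on_path_uv a b u v : e u v -> on_path e a b [set u; v] <->
  (connect (cut [set u;v]) v a != connect (cut [set u;v]) v b).
Proof.
move=> euv; split.
  by case=> p [pp lp up Ein]; rewrite -lp -cross.
move=> H; have [p [pp lp up]] := spath (econn a b).
by exists p; split => //; rewrite cross // lp.
Qed.

Lemma on_path_any a b E p : on_path e a b E -> path e a p -> last a p = b ->
  uniq (a :: p) -> E \in walk_edges a p.
Proof.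
move=> H pp lp up; have [u [v [EE euv]]] := on_path_edge H.
by move: H; rewrite EE on_path_uv // cross // lp.
Qed.

Lemma on_path_sym a b E : on_path e a b E -> on_path e b a E.
Proof.
move=> H; have [u [v [EE euv]]] := on_path_edge H.
by move: H; rewrite EE !on_path_uv // eq_sym.
Qed.

Lemma on_path_sub (F : rel V) a b E : subrel F e -> on_path e a b E ->
  connect F a b -> on_path F a b E.
Proof.
move=> sF H /spath [p [pp lp up]]; exists p; split => //.
by apply: on_path_any H _ lp up; apply: sub_path pp.
Qed.

Lemma on_path_sup (F : rel V) a b E : subrel F e -> on_path F a b E ->
  on_path e a b E.
Proof. by move=> sF [p [pp lp up Ein]]; exists p; split => //; apply: sub_path pp. Qed.

Variable n : nat.
Variable leaf : 'I_n -> V.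
Hypothesis leaf_inj : injective leaf.
Hypothesis deg1 : forall v, (degree e v == 1%N) = (v \in codom leaf).
Hypothesis deg3 : forall v, v \notin codom leaf -> degree e v = 3%N.

Lemma leaf_nb v x y : v \in codom leaf -> e v x -> e v y -> x = y.
Proof.
rewrite -deg1 /degree => /cards1P [z Ez] evx evy.
have : x \in [set u | e v u] by rewrite inE.
have : y \in [set u | e v u] by rewrite inE.
by rewrite Ez !inE => /eqP -> /eqP ->.
Qed.

Lemma int_nb v z x y d : v \notin codom leaf -> e v z -> e v x -> e v y ->
  z != x -> z != y -> x != y -> e v d -> [|| d == z, d == x | d == y].
Proof.
move=> nl evz evx evy nzx nzy nxy evd.
have sub : [set z; x; y] \subset [set u | e v u].
  by apply/subsetP => w; rewrite !inE => /orP [/orP [] | ] /eqP ->.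
have card3 : #|[set z; x; y]| = #|[set u | e v u]|.
  rewrite -/(degree e v) deg3 // setUC cardsU1 cards2 nzx !inE.
  by rewrite ![y == _]eq_sym (negbTE nzy) (negbTE nxy).
move/(subset_cardP card3): sub => H.
by have := H d; rewrite !inE evd -orbA => ->.
Qed.

Lemma crm_blk (r : rel V) S M B : crm leaf r S M -> B \in M ->
  exists k l, k != l /\ B = [set k; l].
Proof. by case=> _ c2 _ _ BM; apply/cards2P; rewrite c2. Qed.

Lemma blk_with (r : rel V) S M B k : crm leaf r S M -> B \in M -> k \in B ->
  exists l, k != l /\ B = [set k; l].
Proof.
move=> C BM kB; have [a [b [nab EB]]] := crm_blk C BM.
move: kB; rewrite EB !inE => /orP [] /eqP ->.
  by exists b.
by exists a; split; [rewrite eq_sym | rewrite setUC].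
Qed.

Lemma odd_sum (I : finType) (A : pred I) (f : I -> nat) :
  odd (\sum_(i in A) f i) = odd (\sum_(i in A) odd (f i)).
Proof.
apply: (big_ind2 (fun a b => odd a = odd b)) => //.
  by move=> x1 x2 y1 y2 h1 h2; rewrite !oddD h1 h2.
by move=> i _; rewrite oddb.
Qed.

Lemma card_I (I : finType) (A Z : {set I}) : #|A :&: Z| = \sum_(m in A) (m \in Z).
Proof.
rewrite -sum1_card big_mkcond [RHS]big_mkcond; apply: eq_bigr => m _.
by rewrite inE; case: (m \in A); case: (m \in Z).
Qed.

Lemma card_cover_I (I : finType) (S Z : {set I}) M : partition M S ->
  #|S :&: Z| = \sum_(B in M) #|B :&: Z|.
Proof.
move=> /and3P [/eqP cM tM _].
rewrite card_I -cM big_trivIset //; apply: eq_bigr => B _; by rewrite card_I.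
Qed.

Lemma par S M1 M2 k2 l2 E : crm leaf e S M1 -> crm leaf e S M2 ->
  [set k2; l2] \in M2 -> on_path e (leaf k2) (leaf l2) E ->
  exists k' l', [set k'; l'] \in M1 /\ on_path e (leaf k') (leaf l') E.
Proof.
move=> C1 C2 B2in op.
have [u [v [EE euv]]] := on_path_edge op.
subst E.
set Z := [set m | connect (cut [set u; v]) v (leaf m)].
have key : forall k l, k != l -> on_path e (leaf k) (leaf l) [set u; v] <->
    odd #|[set k; l] :&: Z|.
  move=> k l nkl; rewrite on_path_uv // card_I big_setU1 ?inE // big_set1.
  rewrite oddD !oddb !inE.
  by case: (connect _ v (leaf k)); case: (connect _ v (leaf l)).
have hM : forall M, crm leaf e S M ->
    odd #|S :&: Z| = odd (\sum_(B in M) odd #|B :&: Z|).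
  by move=> M [pM _ _ _]; rewrite (card_cover_I _ pM) odd_sum.
have o2 : \sum_(B in M2) odd #|B :&: Z| = 1%N.
  rewrite (bigD1 _ B2in) /=.
  have nk : k2 != l2.
    by case: C2 => _ c2 _ _; move: (c2 _ B2in); rewrite cards2; case: (k2 != l2).
  rewrite ((key _ _ nk).1 op) big1 // => B /andP [BM nB].
  have [k [l [nkl EB]]] := crm_blk C2 BM.
  suff -> : odd #|B :&: Z| = false by [].
  apply/negbTE/negP; rewrite EB => /(key _ _ nkl).2 opB.
  case: C2 => _ _ _ c4.
  apply: (c4 _ _ B2in BM _ k2 l2 k l erefl EB); first by rewrite eq_sym.
  by exists [set u; v]; split.
have H : odd (\sum_(B in M1) odd #|B :&: Z|) by rewrite -hM // (hM M2) // o2.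
have [B BM oB] : exists2 B, B \in M1 & odd #|B :&: Z|.
  apply/exists_inP; apply: contraLR H => /exists_inPn H'.
  by rewrite big1 // => B BM; rewrite (negbTE (H' B BM)).
have [k [l [nkl EB]]] := crm_blk C1 BM.
exists k, l; split; first by rewrite -EB.
by apply/(key _ _ nkl); rewrite -EB.
Qed.

Lemma ext_contra k l p y r : path e (leaf k) (p ++ y :: r) ->
  uniq (leaf k :: p ++ y :: r) -> last (leaf k) p = leaf l -> k != l -> False.
Proof.
move=> pp up lp nkl.
case/lastP: p pp up lp => [|p0 w] pp up lp.
  by move: nkl; rewrite /= in lp; rewrite (leaf_inj lp) eqxx.
rewrite last_rcons in lp.
have Es := cons_rcons_cat (leaf k) p0 w (y :: r).
have Es' : leaf k :: (rcons p0 w ++ y :: r) =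
    rcons (belast (leaf k) p0) (last (leaf k) p0) ++ w :: y :: r.
  by rewrite Es cat_rcons.
have ezw := path_zip pp (split_zip Es).
have ewy := path_zip pp (split_zip Es').
move: up; rewrite Es cat_uniq => /and3P [_ _ /andP [hz _]].
rewrite lp esym in ezw; rewrite lp in ewy.
have zy := leaf_nb (codom_f leaf l) ezw ewy.
by move: hz; rewrite zy !inE eqxx !orbT.
Qed.

Lemma div S M1 M2 k l1 l2 : crm leaf e S M1 -> crm leaf e S M2 ->
  [set k; l1] \in M1 -> [set k; l2] \in M2 -> k != l1 -> k != l2 -> l1 = l2.
Proof.
move=> C1 C2 B1 B2 n1 n2.
have [p1 [pp1 lp1 up1]] := spath (econn (leaf k) (leaf l1)).
have [p2 [pp2 lp2 up2]] := spath (econn (leaf k) (leaf l2)).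
case: (prefix_cases p1 p2) =>
  [E|[[y [r E]]|[[y [r E]]|[c [x [y [r1 [r2 [nxy E1 E2]]]]]]]]].
- by apply: leaf_inj; rewrite -lp1 -lp2 E.
- by case: (@ext_contra k l1 p1 y r _ _ lp1 n1); rewrite -E.
- by case: (@ext_contra k l2 p2 y r _ _ lp2 n2); rewrite -E.
subst p1 p2.
case/lastP: c pp1 up1 lp1 pp2 up2 lp2 => [|c0 w] pp1 up1 lp1 pp2 up2 lp2.
  move: pp1 => /= /andP [ex _]; move: pp2 => /= /andP [ey _].
  by move: nxy; rewrite (leaf_nb (codom_f _ _) ex ey) eqxx.
have E1 := cons_rcons_cat (leaf k) c0 w (x :: r1).
have E2 := cons_rcons_cat (leaf k) c0 w (y :: r2).
move: E1 E2.
set u := belast (leaf k) c0; set z := last (leaf k) c0 => E1 E2.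
have E1' : leaf k :: (rcons c0 w ++ x :: r1) = rcons u z ++ w :: x :: r1.
  by rewrite E1 cat_rcons.
have E2' : leaf k :: (rcons c0 w ++ y :: r2) = rcons u z ++ w :: y :: r2.
  by rewrite E2 cat_rcons.
have ezw := path_zip pp1 (split_zip E1).
have ewx := path_zip pp1 (split_zip E1').
have ewy := path_zip pp2 (split_zip E2').
have [nzx nzy] : z != x /\ z != y.
  move: (up1) (up2); rewrite E1 E2 !cat_uniq => /and3P [_ _ /andP [h1 _]].
  move=> /and3P [_ _ /andP [h2 _]].
  by split; [apply: contraNneq h1 => ->|apply: contraNneq h2 => ->];
    rewrite !inE eqxx !orbT.
have wnl : w \notin codom leaf.
  by apply/negP => wl; move: nxy; rewrite (leaf_nb wl ewx ewy) eqxx.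
have nbw : forall d, e w d -> [|| d == z, d == x | d == y].
  by move=> d; apply: int_nb => //; rewrite esym.
have opE : on_path e (leaf k) (leaf l2) [set w; y].
  by exists (rcons c0 w ++ y :: r2); split => //; exact: we_split E2'.
have [k' [l' [B' op']]] := par C1 C2 B2 opE.
have inS1 : forall d, (d == z) || (d == x) ->
    on_path e (leaf k) (leaf l1) [set d; w].
  move=> d /orP [] /eqP ->; exists (rcons c0 w ++ x :: r1); split => //.
    exact: we_split E1.
  by rewrite setUC; exact: we_split E1'.
have nB : [set k; l1] != [set k'; l'].
  apply/negP => /eqP EB.
  have op1 : on_path e (leaf k) (leaf l1) [set w; y].
    by case: (set2_eq EB) => [[-> ->]|[-> ->]] //; exact: on_path_sym.
  have := on_path_any op1 pp1 lp1 up1.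
  case/we_zip => c1 [d1 [cd1 Ecd]].
  have [t1 [t2 Et]] := zip_split cd1.
  case: (set2_eq Ecd) => [[wc yd]|[wd yc]]; subst c1 d1.
    have [_ [yx _]] := uniq_split up1 Et E1'.
    by move: nxy; rewrite yx eqxx.
  rewrite -[t1 ++ _]cat_rcons in Et.
  have [E3 _] := uniq_split up1 Et E1'.
  have := congr1 (last w) E3; rewrite !last_rcons => yz.
  by move: nzy; rewrite yz eqxx.
case: op' => p' [pp' lp' up' Ein'].
case/we_zip: Ein' => c1 [d1 [cd1 Ecd]].
have [t1 [t2 Et]] := zip_split cd1.
have [d dzx opd] : exists2 d, (d == z) || (d == x) &
    on_path e (leaf k') (leaf l') [set d; w].
  case: (set2_eq Ecd) => [[wc yd]|[wd yc]]; subst c1 d1.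
    case/lastP: t1 Et => [|t0 d] Et.
      by move: wnl; case: Et => <- _; rewrite codom_f.
    rewrite cat_rcons in Et.
    have edw := path_zip pp' (split_zip Et).
    have ndy : d != y.
      move: up'; rewrite Et cat_uniq => /and3P [_ _ /andP [hd _]].
      by apply: contraNneq hd => ->; rewrite !inE eqxx !orbT.
    have := nbw d; rewrite esym => /(_ edw); rewrite (negbTE ndy) orbF => dzx.
    by exists d => //; exists p'; split => //; exact: we_split Et.
  case: t2 Et => [|d t3] Et.
    have : last (leaf k') (leaf k' :: p') = w by rewrite Et last_cat.
    by rewrite /= lp' => wl; move: wnl; rewrite -wl codom_f.
  have ndy : d != y.
    move: up'; rewrite Et cat_uniq => /and3P [_ _ /andP [hd _]].
    by apply: contraNneq hd => ->; rewrite !inE eqxx !orbT.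
  rewrite -[t1 ++ _]cat_rcons in Et.
  have ewd := path_zip pp' (split_zip Et).
  have := nbw d ewd; rewrite (negbTE ndy) orbF => dzx.
  by exists d => //; exists p'; split => //; rewrite setUC; exact: we_split Et.
case: C1 => _ _ _ c4.
case: (c4 _ _ B1 B' nB k l1 k' l' erefl erefl).
by exists [set d; w]; split => //; exact: inS1.
Qed.

Lemma crm_uniq S M1 M2 : crm leaf e S M1 -> crm leaf e S M2 -> M1 = M2.
Proof.
suff sub: forall M1 M2, crm leaf e S M1 -> crm leaf e S M2 -> M1 \subset M2.
  by move=> C1 C2; apply/eqP; rewrite eqEsubset !sub.
move=> {}M1 {}M2 C1 C2; apply/subsetP => B BM.
have [k [l1 [nk1 EB]]] := crm_blk C1 BM.
have kS : k \in S.
  case: C1 => /and3P [/eqP <- _ _] _ _ _.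
  by apply/bigcupP; exists B => //; rewrite EB set21.
have [B2 B2M kB2] : exists2 B2, B2 \in M2 & k \in B2.
  case: C2 => /and3P [/eqP cM _ _] _ _ _.
  by rewrite -cM in kS; case/bigcupP: kS => B2; exists B2.
have [l2 [nk2 EB2]] := blk_with C2 B2M kB2.
have := div C1 C2 _ _ nk1 nk2; rewrite -EB -EB2 => /(_ BM B2M) l12.
by rewrite EB l12 -EB2.
Qed.

Lemma crm_even (r : rel V) S M : crm leaf r S M -> ~~ odd #|S|.
Proof.
case=> pM c2 _ _; rewrite (card_partition pM) (eq_bigr (fun _ => 2%N) c2).
by rewrite sum_nat_const oddM andbF.
Qed.

Lemma crm_sub (r : rel V) S M B : crm leaf r S M -> B \in M -> B \subset S.
Proof.
case=> /and3P [/eqP <- _ _] _ _ _ BM.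
by apply/subsetP => m mB; apply/bigcupP; exists B.
Qed.

Variables i j : 'I_n.
Hypothesis nij : i != j.

Definition F := remove_path e (leaf i) (leaf j).

Lemma F_sub : subrel F e.
Proof. by move=> x y /andP []. Qed.

Lemma F_edge u v : F u v -> ~ on_path e (leaf i) (leaf j) [set u; v].
Proof. by case/andP => _ /negP H H'; apply: H; apply/asboolP. Qed.

Lemma F_intro u v : e u v -> ~ on_path e (leaf i) (leaf j) [set u; v] -> F u v.
Proof. by move=> euv H; rewrite /F /remove_path euv /=; apply/negP => /asboolP. Qed.

Lemma isoF_aux m m' d : m != m' -> F (leaf m) d ->
  on_path e (leaf m) (leaf m') [set leaf m; d].
Proof.
move=> nm Fd; have [p [pp lp up]] := spath (econn (leaf m) (leaf m')).
case: p pp lp up => [|d' p] pp lp up.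
  by move: nm; rewrite /= in lp; rewrite (leaf_inj lp) eqxx.
have ed' : e (leaf m) d' by move: pp => /= /andP [].
have dd : d = d' := leaf_nb (codom_f _ _) (F_sub Fd) ed'.
by exists (d' :: p); split => //; rewrite dd /walk_edges /= mem_head.
Qed.

Lemma isoF m d : (m == i) || (m == j) -> ~~ F (leaf m) d.
Proof.
case/orP => /eqP ->; apply/negP => Fd.
  exact: (F_edge Fd) (isoF_aux nij Fd).
apply: (F_edge Fd); apply: on_path_sym; apply: isoF_aux Fd.
by rewrite eq_sym.
Qed.

Lemma notin_F S M m : crm leaf F S M -> (m == i) || (m == j) -> m \notin S.
Proof.
move=> C mij; apply/negP => mS.
have C' := C; case: C' => /and3P [/eqP cM _ _] _ c3 _.
rewrite -cM in mS; case/bigcupP: mS => B BM mB.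
have [l [nml EB]] := blk_with C BM mB.
have := c3 _ BM _ _ mB (_ : l \in B); rewrite EB set22 => /(_ isT).
case/spath => [[|d p] [pp lp up]].
  by move: nml; rewrite /= in lp; rewrite (leaf_inj lp) eqxx.
by move: pp => /= /andP [Fd _]; move: (isoF d mij); rewrite Fd.
Qed.

Lemma pathF_edge a p E : path F a p -> E \in walk_edges a p ->
  ~ on_path e (leaf i) (leaf j) E.
Proof. by move=> pp /we_zip [c [d [cd ->]]]; apply: F_edge; apply: path_zip pp cd. Qed.

Lemma connF_nos a b E : connect F a b -> on_path e a b E ->
  ~ on_path e (leaf i) (leaf j) E.
Proof.
move=> cF op; have [p [pp _ _ Ein]] := on_path_sub F_sub op cF.
exact: pathF_edge pp Ein.
Qed.

Lemma ij_path k l E : [set i; j] = [set k; l] -> on_path e (leaf k) (leaf l) E ->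
  on_path e (leaf i) (leaf j) E.
Proof. by case/set2_eq => [[-> ->]|[-> ->]] // H; exact: on_path_sym H. Qed.

Lemma tr1 S M : crm leaf F S M -> crm leaf e (S :|: [set i; j]) ([set i; j] |: M).
Proof.
move=> C; have C' := C; case: C' => /and3P [/eqP cM tM n0M] c2 c3 c4.
have iS : i \notin S by apply: notin_F C _; rewrite eqxx.
have jS : j \notin S by apply: notin_F C _; rewrite eqxx orbT.
have dis : {in M, forall B : {set 'I_n}, [disjoint [set i; j] & B]}.
  move=> B BM; rewrite disjoints_subset; apply/subsetP => m.
  rewrite !inE => /orP [] /eqP ->; apply/negP => mB;
    by move: (subsetP (crm_sub C BM) _ mB); rewrite ?(negbTE iS) ?(negbTE jS).
split.
- apply/and3P; split.
  + have ijM : [set i; j] \notin M := (trivIsetU1 dis tM n0M).2.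
    by rewrite -cM /cover big_setU1 //= setUC.
  + by case: (trivIsetU1 dis tM n0M).
  + rewrite !inE negb_or n0M andbT; apply/eqP => /setP/(_ i).
    by rewrite !inE eqxx.
- move=> B; rewrite !inE => /orP [/eqP -> | /c2 //].
  by rewrite cards2 nij.
- move=> B; rewrite !inE => /orP [/eqP -> k l _ _ | BM k l kB lB].
    exact: econn.
  apply: connect_sub (c3 _ BM _ _ kB lB) => x y Fxy; apply: connect1.
  exact: F_sub.
move=> B C0; rewrite !inE => /orP [/eqP -> | BM] /orP [/eqP -> | CM] nBC
  k l k' l' EB EC [E [opB opC]].
- by rewrite eqxx in nBC.
- have cF : connect F (leaf k') (leaf l') by apply: (c3 _ CM); rewrite EC ?set21 ?set22.
  exact: (connF_nos cF opC) (ij_path EB opB).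
- have cF : connect F (leaf k) (leaf l) by apply: (c3 _ BM); rewrite EB ?set21 ?set22.
  exact: (connF_nos cF opB) (ij_path EC opC).
have cF : connect F (leaf k) (leaf l) by apply: (c3 _ BM); rewrite EB ?set21 ?set22.
have cF' : connect F (leaf k') (leaf l') by apply: (c3 _ CM); rewrite EC ?set21 ?set22.
apply: (c4 _ _ BM CM nBC k l k' l' EB EC); exists E.
by split; apply: on_path_sub F_sub _ _.
Qed.

Lemma tr2 S M : crm leaf e S M -> [set i; j] \in M ->
  crm leaf F (S :\: [set i; j]) (M :\ [set i; j]).
Proof.
move=> C ijM; have C' := C; case: C' => /and3P [/eqP cM tM n0M] c2 c3 c4.
have tM' := trivIsetP tM.
split.
- apply/and3P; split.
  + apply/eqP/setP => m; rewrite !inE; apply/bigcupP/andP.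
      case=> B; rewrite !inE => /andP [nB BM] mB; split.
        apply/negP => mij; have := tM' _ _ BM ijM nB.
        move/disjointFr => /(_ _ mB) H; move: mij; by rewrite ?inE -in_set2 H.
      by rewrite -cM; apply/bigcupP; exists B.
    case=> mij; rewrite -cM => /bigcupP [B BM mB]; exists B => //.
    rewrite !inE BM andbT; apply: contraNneq mij => EB.
    by rewrite -in_set2 -EB.
  + exact: trivIsetS (subD1set _ _) tM.
  + by rewrite !inE negb_and n0M orbT.
- by move=> B; rewrite !inE => /andP [_ /c2].
- move=> B; rewrite !inE => /andP [nB BM] k l kB lB.
  case: (eqVneq k l) => [-> | nkl]; first exact: connect0.
  have [l' [nkl' EB]] := blk_with C BM kB.
  have ll' : l = l'.
    by move: lB; rewrite EB !inE => /orP [] /eqP // lk; rewrite lk eqxx in nkl.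
  subst l'.
  have ns := c4 _ _ BM ijM nB k l i j EB erefl.
  have [p [pp lp up]] := spath (econn (leaf k) (leaf l)).
  apply/connectP; exists p => //.
  apply: zip_path => c d cd; apply: F_intro; first exact: path_zip pp cd.
  move=> opij; apply: ns; exists [set c; d]; split => //.
  by exists p; split => //; apply/mapP; exists (c, d).
move=> B C0; rewrite !inE => /andP [_ BM] /andP [_ CM] nBC k l k' l' EB EC.
move=> [E [op1 op2]]; apply: (c4 _ _ BM CM nBC k l k' l' EB EC).
by exists E; split; apply: on_path_sup F_sub _.
Qed.

Lemma gam (R : realFieldType) S M B (alpha : {set 'I_n} -> R) :
  crm leaf F S M -> B \in M -> gammaV leaf e i j alpha B = alpha B.
Proof.
move=> C BM; rewrite /gammaV; case: asboolP => // [[k [l [EB [E [op1 op2]]]]]].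
have cF : connect F (leaf k) (leaf l).
  by case: C => _ _ c3 _; apply: (c3 _ BM); rewrite EB ?set21 ?set22.
by case: (connF_nos cF op2).
Qed.

Lemma ij_notin S M : crm leaf F S M -> [set i; j] \notin M.
Proof.
move=> C; apply/negP => ijM.
have := subsetP (crm_sub C ijM) i; rewrite set21 => /(_ isT).
by apply/negP; apply: notin_F C _; rewrite eqxx.
Qed.

Lemma crm_uniqF S M1 M2 : crm leaf F S M1 -> crm leaf F S M2 -> M1 = M2.
Proof.
move=> C1 C2; have := crm_uniq (tr1 C1) (tr1 C2) => E.
by rewrite -(setU1K (ij_notin C1)) E setU1K //; apply: ij_notin C2.
Qed.

Local Open Scope ring_scope.

Lemma main_sec (R : realFieldType) (alpha beta : {set 'I_n} -> R) (x : 'I_n -> R) :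
  (forall B : {set 'I_n}, #|B| = 2%N -> B != [set i; j] -> alpha B = beta B) ->
  fx leaf e x alpha - fx leaf e x beta =
    x i * x j * (alpha [set i; j] - beta [set i; j]) *
    fx leaf F x (gammaV leaf e i j alpha).
Proof.
move=> hab.
have pickE : forall S M, crm leaf e S M ->
    [pick M' | `[< crm leaf e S M' >]] = Some M.
  move=> S M C; case: pickP => [M' /asboolP C'|H]; first by rewrite (crm_uniq C' C).
  by move: (H M) => /=; case: asboolP.
have pickF : forall S M, crm leaf F S M ->
    [pick M' | `[< crm leaf F S M' >]] = Some M.
  move=> S M C; case: pickP => [M' /asboolP C'|H]; first by rewrite (crm_uniqF C' C).
  by move: (H M) => /=; case: asboolP.
rewrite /fx -mulrBr -sumrB.
rewrite (bigID (fun S => `[< exists M, crm leaf e S M /\ [set i; j] \in M >])) /=.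
rewrite [X in _ * (_ + X)]big1 ?addr0; last first.
  move=> S /andP [/andP [_ /asboolP [M C]] nQ].
  rewrite /alphaF (pickE _ _ C).
  rewrite (eq_bigr beta) ?subrr // => B BM; apply: hab.
    by case: C => _ c2 _ _; apply: c2.
  apply: contraNneq nQ => EB; apply/asboolP; exists M; split => //.
  by rewrite -EB.
rewrite [RHS]mulrCA; congr (_ * _); rewrite mulr_sumr.
rewrite (reindex_onto (fun S' => S' :|: [set i; j]) (fun S => S :\: [set i; j])) /=;
  last first.
  move=> S /andP [_ /asboolP [M [C ijM]]].
  have sub := crm_sub C ijM.
  apply/setP => m; rewrite in_setU in_setD.
  case mij: (m \in [set i; j]) => /=; last by rewrite ?orbF.
  by rewrite (subsetP sub _ mij).
apply: eq_big => S'.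
  apply/idP/idP.
    move=> /andP [/andP [_ /asboolP [M [C ijM]]] /eqP ES'].
    have C2 := tr2 C ijM; rewrite ES' in C2.
    by rewrite (crm_even C2) /=; apply/asboolP; exists (M :\ [set i; j]).
  move=> /andP [_ /asboolP [M' C']].
  have C1 := tr1 C'.
  have iS : i \notin S' by apply: notin_F C' _; rewrite eqxx.
  have jS : j \notin S' by apply: notin_F C' _; rewrite eqxx orbT.
  rewrite (crm_even C1) /=; apply/andP; split.
    apply/andP; split; apply/asboolP; first by exists ([set i; j] |: M').
    by exists ([set i; j] |: M'); split => //; rewrite setU11.
  apply/eqP/setP => m; rewrite !inE.
  case: (eqVneq m i) => [->|ni]; first by rewrite (negbTE iS).
  case: (eqVneq m j) => [->|nj]; first by rewrite (negbTE jS).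
  by rewrite /= orbF.
move=> /andP [/andP [_ /asboolP [M [C ijM]]] /eqP ES'].
have C' := tr2 C ijM; rewrite ES' in C'.
have iS : i \notin S' by apply: notin_F C' _; rewrite eqxx.
have jS : j \notin S' by apply: notin_F C' _; rewrite eqxx orbT.
have ijn := ij_notin C'.
rewrite /alphaF (pickE _ _ C) (pickF _ _ C') !(big_setD1 _ ijM) /=.
move: C' ijn; set M' := M :\ [set i; j] => C' ijn.
have eqab : \prod_(B in M') beta B = \prod_(B in M') alpha B.
  apply: eq_bigr => B BM; symmetry; apply: hab.
    by case: C' => _ c2 _ _; apply: c2.
  by apply: contraNneq ijn => <-.
have eqg : \prod_(B in M') gammaV leaf e i j alpha B = \prod_(B in M') alpha B.
  by apply: eq_bigr => B BM; apply: gam C' BM.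
have -> : S' :|: [set i; j] = i |: (j |: S') by rewrite setUC -setUA.
have xs : \prod_(k in i |: (j |: S')) x k = x i * (x j * \prod_(k in S') x k).
  by rewrite big_setU1 ?big_setU1 // !inE negb_or nij.
rewrite xs eqab eqg; ring.
Qed.

End Tree.

Unset Implicit Arguments.
Local Open Scope ring_scope.

Theorem lemma6 (V : finType) (e : rel V) (n : nat) (leaf : 'I_n -> V)
  (R : realFieldType) (i j : 'I_n) (alpha beta : {set 'I_n} -> R)
  (x : 'I_n -> R) :
  is_tree e ->
  injective leaf ->
  (forall v : V, (degree e v == 1%N) = (v \in codom leaf)) ->
  (forall v : V, v \notin codom leaf -> degree e v = 3%N) ->
  i != j ->
  (forall B : {set 'I_n}, #|B| = 2%N -> -1 <= alpha B <= 1) ->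
  (forall B : {set 'I_n}, #|B| = 2%N -> -1 <= beta B <= 1) ->
  (forall B : {set 'I_n}, #|B| = 2%N -> B != [set i; j] -> alpha B = beta B) ->
  (forall k, x k = 1 \/ x k = -1) ->
  fx leaf e x alpha - fx leaf e x beta =
    x i * x j * (alpha [set i; j] - beta [set i; j]) *
    fx leaf (remove_path e (leaf i) (leaf j)) x (gammaV leaf e i j alpha).
Proof.
case=> esym eirr econn eacyc linj deg1 deg3 nij _ _ hab _.
exact: (main_sec esym eirr econn eacyc linj deg1 deg3 nij x hab).
Qed.
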